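(* Let $\mathcal{L}$ be a complex filiform Lie algebra of dimension $n\ge3$ with a basis $\{e_1,\dots,e_n\}$ such that $[e_1,e_i]=e_{i+1}$ for all $2\le i\le n-1$ and $\{e_{k+2},\dots,e_n\}$ is a basis of $\mathcal{L}^k$ for $1\le k\le n-2$. Define the linear map $\Delta:\mathcal{L}\to\mathcal{L}$ by $\Delta(x)=x+x_3e_n$ for $x=\sum_{k=1}^n x_ke_k$. Then $\Delta$ is a local automorphism of $\mathcal{L}$ which is not an automorphism.
   Context: For a Lie algebra $\mathcal{L}$, $\mathcal{L}^0=\mathcal{L}$, $\mathcal{L}^k=[\mathcal{L}^{k-1},\mathcal{L}]$; an $n$-dimensional nilpotent Lie algebra is filiform if $\dim\mathcal{L}^k=n-k-1$ for $1\le k\le n-1$. (Other brackets among basis elements besides $[e_1,e_i]=e_{i+1}$ may be nonzero.) An automorphism is an invertible linear map $\Phi$ with $\Phi([x,y])=[\Phi(x),\Phi(y)]$ for all $x,y$; a linear map $\Delta$ is a local automorphism if for every $x\in\mathcal{L}$ there is an automorphism $\Phi_x$ with $\Phi_x(x)=\Delta(x)$. *)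

(* Defs.v *)
From HB Require Import structures.
From mathcomp Require Import all_boot all_order all_algebra.
Set Implicit Arguments. Unset Strict Implicit. Unset Printing Implicit Defensive.
Import Order.TTheory GRing.Theory Num.Theory.
Local Open Scope ring_scope.

(* A Lie algebra of dimension n over F is modelled on F^n = 'rV[F]_n, i.e. its
   elements are written in coordinates w.r.t. a fixed basis e_1,...,e_n,
   with a bracket br. *)

Section Lie.
Variable (F : fieldType) (n : nat).
Implicit Types (br : 'rV[F]_n -> 'rV[F]_n -> 'rV[F]_n) (f : 'rV[F]_n -> 'rV[F]_n).

(* e_i, 1-based: e_i has a 1 in coordinate i (positions 1..n) *)
Definition ev (i : nat) : 'rV[F]_n := \row_(j < n) ((j.+1 == i)%:R).

Definition coordk (x : 'rV[F]_n) (k : nat) : F := \sum_(j < n | j.+1 == k) x 0 j.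

Definition is_linear_map f :=
  forall (a : F) (x y : 'rV[F]_n), f (a *: x + y) = a *: f x + f y.

Definition is_lie_bracket br :=
  [/\ forall (a : F) x y z, br (a *: x + y) z = a *: br x z + br y z,
      forall (a : F) x y z, br z (a *: x + y) = a *: br z x + br z y,
      forall x, br x x = 0
    & forall x y z, br x (br y z) + br y (br z x) + br z (br x y) = 0].

(* lower central series L^0 = L, L^(k+1) = [L^k, L]; as a subspace (row space
   of a square matrix), spanned by the brackets of spanning vectors of L^k
   with the basis vectors of L (by bilinearity this is the span of [L^k, L]) *)
Fixpoint lcs br (k : nat) : 'M[F]_n :=
  match k with
  | 0 => 1%:M
  | k.+1 => (\sum_(i < n) \sum_(j < n) <<br (row i (lcs br k)) (ev j.+1)>>)%MS
  end.

Definition nilpotent_lie br := exists m, lcs br m = 0.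

Definition filiform br :=
  nilpotent_lie br /\
  forall k, (1 <= k <= n.-1)%N -> \rank (lcs br k) = (n - k - 1)%N.

Definition span_from (a : nat) : 'M[F]_n :=
  (\sum_(j < n | (a <= j.+1)%N) <<ev j.+1>>)%MS.

Definition lie_automorphism br f :=
  [/\ is_linear_map f, bijective f & forall x y, f (br x y) = br (f x) (f y)].

Definition local_automorphism br f :=
  is_linear_map f /\
  forall x, exists phi, lie_automorphism br phi /\ phi x = f x.

Definition Delta3 (x : 'rV[F]_n) : 'rV[F]_n := x + coordk x 3 *: ev n.

End Lie.

(* Main.v *)
Require Import Defs.
From HB Require Import structures.
From mathcomp Require Import all_boot all_order all_algebra.
From mathcomp Require Import ring zify.
Import Order.TTheory GRing.Theory Num.Theory.
Local Open Scope ring_scope.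
Set Implicit Arguments. Unset Strict Implicit.

Section Gen.
Variable (F : fieldType) (n : nat).

Lemma sum_ind (I : finType) (PP : pred I) (B : I -> 'M[F]_n) (P : 'rV[F]_n -> Prop) :
  P 0 -> (forall a x y, P x -> P y -> P (a *: x + y)) ->
  (forall i w, PP i -> (w <= B i)%MS -> P w) ->
  forall v, (v <= \sum_(i | PP i) B i)%MS -> P v.
Proof.
move=> P0 Pc PB v /sub_sumsmxP [u ->].
apply: big_ind => //.
  by move=> x y Px Py; have := Pc 1 x y Px Py; rewrite scale1r.
by move=> i Pi; apply: (PB i) => //; apply: submxMl.
Qed.

Lemma gen_ind (g : 'rV[F]_n) (P : 'rV[F]_n -> Prop) :
  P 0 -> (forall a x y, P x -> P y -> P (a *: x + y)) -> P g ->
  forall w, (w <= <<g>>)%MS -> P w.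
Proof.
move=> P0 Pc Pg w; rewrite genmxE => /sub_rVP [a ->].
by have := Pc a g 0 Pg P0; rewrite addr0.
Qed.

Lemma evE (k : nat) (j : 'I_n) : (@ev F n k) 0 j = (j.+1 == k)%:R.
Proof. by rewrite mxE. Qed.

Lemma coordkE (x : 'rV[F]_n) (j : 'I_n) : coordk x j.+1 = x 0 j.
Proof.
by rewrite /coordk (big_pred1 j) // => i /=; rewrite eqSS.
Qed.

Lemma sf_coord a (v : 'rV[F]_n) : (v <= @span_from F n a)%MS ->
  forall j : 'I_n, (j.+1 < a)%N -> v 0 j = 0.
Proof.
apply: (sum_ind (P := fun v => forall j : 'I_n, (j.+1 < a)%N -> v 0 j = 0)).
- by move=> j _; rewrite mxE.
- by move=> b x y Px Py j hj; rewrite !mxE Px // Py // mulr0 addr0.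
move=> i w hi; move: w; apply: (@gen_ind (@ev F n i.+1)).
- by move=> j _; rewrite mxE.
- by move=> b x y Px Py j hj; rewrite !mxE Px // Py // mulr0 addr0.
move=> j hj; rewrite evE; case: eqP => // e.
by move: hi hj; rewrite -e; lia.
Qed.

Lemma sf_mem a (v : 'rV[F]_n) : (forall j : 'I_n, (j.+1 < a)%N -> v 0 j = 0) ->
  (v <= @span_from F n a)%MS.
Proof.
move=> hv; rewrite [v]row_sum_delta; apply: summx_sub => j _.
case: (leqP a j.+1) => h.
  apply: scalemx_sub; apply: (sumsmx_sup j) => //; rewrite genmxE.
  rewrite (_ : 'e_j = @ev F n j.+1) ?submx_refl //.
  by apply/rowP => k; rewrite !mxE /= eqSS.
by rewrite hv // scale0r sub0mx.
Qed.

Lemma ev_sf a (j : 'I_n) : (a <= j.+1)%N -> (@ev F n j.+1 <= @span_from F n a)%MS.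
Proof.
move=> h; apply: sf_mem => k hk; rewrite evE; case: eqP => // e.
by move: hk h; rewrite e; lia.
Qed.

End Gen.

Section Br.
Variable (F : fieldType) (n : nat) (br : 'rV[F]_n -> 'rV[F]_n -> 'rV[F]_n).
Hypothesis Hbr : is_lie_bracket br.

Lemma br0l z : br 0 z = 0.
Proof.
case: Hbr => HL _ _ _; have := HL 1 0 0 z; rewrite scaler0 addr0 scale1r.
by move/(congr1 (fun t => t - br 0 z)); rewrite subrr addrK.
Qed.

Lemma br0r z : br z 0 = 0.
Proof.
case: Hbr => _ HR _ _; have := HR 1 0 0 z; rewrite scaler0 addr0 scale1r.
by move/(congr1 (fun t => t - br z 0)); rewrite subrr addrK.
Qed.

Lemma brDl x y z : br (x + y) z = br x z + br y z.
Proof. by case: Hbr => HL _ _ _; have := HL 1 x y z; rewrite !scale1r. Qed.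

Lemma brDr x y z : br z (x + y) = br z x + br z y.
Proof. by case: Hbr => _ HR _ _; have := HR 1 x y z; rewrite !scale1r. Qed.

Lemma brZl a x z : br (a *: x) z = a *: br x z.
Proof. by case: Hbr => HL _ _ _; have := HL a x 0 z; rewrite !addr0 br0l addr0. Qed.

Lemma brZr a x z : br z (a *: x) = a *: br z x.
Proof. by case: Hbr => _ HR _ _; have := HR a x 0 z; rewrite !addr0 br0r addr0. Qed.

Lemma brxx x : br x x = 0.
Proof. by case: Hbr. Qed.

Lemma brN x y : br x y = - br y x.
Proof.
have := brxx (x + y); rewrite brDl !brDr !brxx add0r addr0.
by move/eqP; rewrite addr_eq0 => /eqP.
Qed.

Lemma brNl x z : br (- x) z = - br x z.
Proof. by rewrite -scaleN1r brZl scaleN1r. Qed.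

Lemma brNr x z : br z (- x) = - br z x.
Proof. by rewrite -scaleN1r brZr scaleN1r. Qed.

Lemma subN (A : 'rV[F]_n) (B : 'M[F]_n) : (A <= B)%MS -> (- A <= B)%MS.
Proof. by rewrite eqmx_opp. Qed.

Lemma brsuml I (r : seq I) (P : pred I) (f : I -> 'rV[F]_n) z :
  br (\sum_(i <- r | P i) f i) z = \sum_(i <- r | P i) br (f i) z.
Proof. by apply: (big_morph (fun x => br x z)) => [x y|]; rewrite ?brDl ?br0l. Qed.

Lemma brsumr I (r : seq I) (P : pred I) (f : I -> 'rV[F]_n) z :
  br z (\sum_(i <- r | P i) f i) = \sum_(i <- r | P i) br z (f i).
Proof. by apply: (big_morph (fun x => br z x)) => [x y|]; rewrite ?brDr ?br0r. Qed.

Lemma delta_ev (j : 'I_n) : 'e_j = @ev F n j.+1.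
Proof. by apply/rowP => k; rewrite !mxE /= eqSS. Qed.

Lemma lcs_step k u y : (u <= lcs br k)%MS -> (br u y <= lcs br k.+1)%MS.
Proof.
case/submxP => D ->; rewrite mulmx_sum_row [y]row_sum_delta brsuml.
apply: summx_sub => i _; rewrite brZl; apply: scalemx_sub.
rewrite brsumr; apply: summx_sub => j _; rewrite brZr; apply: scalemx_sub.
rewrite delta_ev /=; apply: (sumsmx_sup i) => //; apply: (sumsmx_sup j) => //.
by rewrite genmxE.
Qed.

Lemma lcs_gen_ind k (P : 'rV[F]_n -> Prop) :
  P 0 -> (forall a x y, P x -> P y -> P (a *: x + y)) ->
  (forall a (b : 'I_n), P (br (row a (lcs br k)) (@ev F n b.+1))) ->
  forall v, (v <= lcs br k.+1)%MS -> P v.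
Proof.
move=> P0 Pc Pg /=; apply: sum_ind => // a w _; apply: sum_ind => // b w' _.
by move: w'; apply: gen_ind.
Qed.

Lemma lcs_br i j u v : (u <= lcs br i)%MS -> (v <= lcs br j)%MS ->
  (br u v <= lcs br (i + j).+1)%MS.
Proof.
elim: j i u v => [|j IH] i u v hu.
  by move=> _; rewrite addn0; apply: lcs_step.
move=> hv; move: v hv i u hu; apply: (lcs_gen_ind
  (P := fun v => forall i u, (u <= lcs br i)%MS -> (br u v <= lcs br (i + j.+1).+1)%MS)).
- by move=> i u _; rewrite br0r sub0mx.
- move=> a x y Px Py i u hu; rewrite brDr brZr.
  by apply: addmx_sub; [apply: scalemx_sub; apply: Px | apply: Py].
move=> a b i u hu.
set r := row a (lcs br j); set e := @ev F n b.+1.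
have hr : (r <= lcs br j)%MS by apply: row_sub.
case: Hbr => _ _ _ HJ.
have := HJ u r e => /eqP; rewrite -addrA addr_eq0 => /eqP ->.
apply: subN; apply: addmx_sub.
  rewrite (brN r) (brN e); apply: subN; rewrite brNl; apply: subN.
  rewrite -addSnnS; apply: IH => //; exact: lcs_step.
rewrite brN; apply: subN; rewrite addnS; apply: lcs_step; exact: IH.
Qed.

End Br.

Definition i2 {m : nat} : 'I_m.+3 := inord 1.
Definition i3 {m : nat} : 'I_m.+3 := inord 2.
Definition iT1 {m : nat} : 'I_m.+3 := inord m.+1.

Lemma vi2 m : nat_of_ord (@i2 m) = 1%N. Proof. by rewrite /i2 inordK. Qed.
Lemma vi3 m : nat_of_ord (@i3 m) = 2%N. Proof. by rewrite /i3 inordK. Qed.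
Lemma viT1 m : nat_of_ord (@iT1 m) = m.+1. Proof. by rewrite /iT1 inordK. Qed.

Section Lin.
Variable (F : fieldType) (n : nat).

Lemma inj_bij (f : 'rV[F]_n -> 'rV[F]_n) : is_linear_map f ->
  (forall y, f y = 0 -> y = 0) -> bijective f.
Proof.
move=> hl hi.
have f0 : f 0 = 0.
  have := hl 1 0 0; rewrite scaler0 addr0 scale1r.
  by move/(congr1 (fun t => t - f 0)); rewrite subrr addrK.
have fD x y : f (x + y) = f x + f y by have := hl 1 x y; rewrite !scale1r.
have fZ a x : f (a *: x) = a *: f x by have := hl a x 0; rewrite !addr0 f0 addr0.
pose M := \matrix_(i < n, j < n) f 'e_i 0 j.
have fM y : f y = y *m M.
  rewrite mulmx_sum_row {1}[y]row_sum_delta.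
  rewrite (big_morph f fD f0); apply: eq_bigr => i _; rewrite fZ; congr (_ *: _).
  by apply/rowP => j; rewrite !mxE.
have hU : M \in unitmx.
  rewrite -row_free_unit -kermx_eq0; apply/rowV0P => v /sub_kermxP hv.
  by apply: hi; rewrite fM.
exists (fun y => y *m invmx M) => y; first by rewrite fM mulmxK.
by rewrite fM mulmxKV.
Qed.
End Lin.

Section Spec.
Variable (F : numFieldType) (m : nat) (br : 'rV[F]_m.+3 -> 'rV[F]_m.+3 -> 'rV[F]_m.+3).
Local Notation n := m.+3.
Hypothesis Hbr : is_lie_bracket br.
Hypothesis Hfil : filiform br.
Hypothesis H4 : forall i, (2 <= i <= n.-1)%N -> br (@ev F n 1) (@ev F n i) = @ev F n i.+1.
Hypothesis H5 : forall k, (1 <= k <= n - 2)%N -> (lcs br k == @span_from F n k.+2)%MS.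

Local Notation e1 := (@ev F n 1).
Local Notation e2 := (@ev F n 2).
Local Notation eP := (@ev F n m.+2).
Local Notation eT := (@ev F n m.+3).
Local Notation iT := (@ord_max m.+2).
Local Notation i1 := (@ord0 m.+2).

Lemma lcs_top : lcs br m.+2 = 0.
Proof.
case: Hfil => _ Hr; have h := Hr m.+2 (ltac:(rewrite /=; lia)).
rewrite (_ : (m.+3 - m.+2 - 1 = 0)%N) in h; last by lia.
by apply/eqP; rewrite -mxrank_eq0 h.
Qed.

Lemma lcs_sub k : (1 <= k <= m.+2)%N -> (lcs br k <= @span_from F n k.+2)%MS.
Proof.
move=> hk; case: (ltnP k m.+2) => h.
  by have /andP[-> _] := @H5 k (ltac:(lia)).
have -> : k = m.+2 by lia.
by rewrite lcs_top sub0mx.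
Qed.

Lemma lcs1 : (@span_from F n 3 <= lcs br 1)%MS.
Proof. by have /andP[_ ->] := @H5 1 (ltac:(lia)). Qed.

Lemma eT_lcs : (eT <= lcs br m.+1)%MS.
Proof.
have /andP[_ h] := @H5 m.+1 (ltac:(lia)).
apply: submx_trans h; exact: (@ev_sf F n m.+3 iT).
Qed.

Lemma brTl (x : 'rV[F]_n) : br eT x = 0.
Proof.
apply/eqP; rewrite -submx0 -lcs_top; apply: lcs_step => //; exact: eT_lcs.
Qed.

Lemma brTr (x : 'rV[F]_n) : br x eT = 0.
Proof. by rewrite (brN Hbr) brTl oppr0. Qed.

Lemma ev0 k (j : 'I_n) : (j.+1 == k) = false -> (@ev F n k) 0 j = 0.
Proof. by move=> h; rewrite evE h. Qed.

Definition rest (x : 'rV[F]_n) := x - x 0 i1 *: e1 - x 0 i2 *: e2.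

Lemma decomp (x : 'rV[F]_n) : x 0 i1 *: e1 + x 0 i2 *: e2 + rest x = x.
Proof. by rewrite /rest; apply/rowP => k; rewrite !mxE; ring. Qed.

Lemma rest_lcs (x : 'rV[F]_n) : (rest x <= lcs br 1)%MS.
Proof.
apply: submx_trans lcs1; apply: sf_mem => j hj; rewrite !mxE.
have [e|e] : (j : nat) = 0%N \/ (j : nat) = 1%N by lia.
  have -> : j = i1 by apply: val_inj.
  by rewrite /= ?vi2 /= mulr0 mulr1 subr0 subrr.
have -> : j = i2 by apply: val_inj => /=; rewrite vi2.
by rewrite /= vi2 /= mulr0 mulr1 subr0 subrr.
Qed.

Lemma brB12 (x y : 'rV[F]_n) : (br x y) 0 i1 = 0 /\ (br x y) 0 i2 = 0.
Proof.
have h : (br x y <= @span_from F n 3)%MS.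
  have /andP[h _] := @H5 1 (ltac:(lia)).
  apply: submx_trans h; apply: lcs_step => //; exact: submx1.
by split; apply: (sf_coord h); rewrite ?vi2.
Qed.

Lemma lcs2_i3 (w : 'rV[F]_n) : (w <= lcs br 2)%MS -> w 0 i3 = 0.
Proof.
move=> h; apply: (sf_coord (a := 4)); last by rewrite vi3.
apply: submx_trans h _; apply: lcs_sub; lia.
Qed.

Lemma brC (x y : 'rV[F]_n) : (br x y) 0 i3 = x 0 i1 * y 0 i2 - x 0 i2 * y 0 i1.
Proof.
rewrite -{1}(decomp x) -{1}(decomp y).
move: (rest_lcs x) (rest_lcs y); move: (rest x) (rest y) => u w hu hw.
have l0 (v : 'rV[F]_n) : (v <= lcs br 0)%MS by exact: submx1.
have z1 : (br e1 w) 0 i3 = 0 by apply: lcs2_i3; exact: (lcs_br Hbr (l0 _) hw).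
have z2 : (br e2 w) 0 i3 = 0 by apply: lcs2_i3; exact: (lcs_br Hbr (l0 _) hw).
have z3 v : (br u v) 0 i3 = 0 by apply: lcs2_i3; exact: lcs_step.
have h12 : br e1 e2 = @ev F n 3 by apply: H4; lia.
rewrite !(brDl Hbr) !(brDr Hbr) !(brZl Hbr) !(brZr Hbr) !(brxx Hbr).
rewrite [br e2 e1](brN Hbr) h12.
rewrite !mxE z1 z2 !z3 vi3 /=; ring.
Qed.

Definition bc := (br e2 eP) 0 iT.

Lemma sf_top v : (v <= @span_from F n m.+3)%MS -> v = v 0 iT *: eT.
Proof.
move=> h; apply/rowP => j; rewrite !mxE.
case: (eqVneq j iT) => [->|ne]; first by rewrite /= eqxx mulr1.
have hj : (j.+1 < m.+3)%N.
  have := ltn_ord j; move: ne; rewrite -(inj_eq val_inj) /= => ne; lia.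
by rewrite (sf_coord h hj) (_ : (j.+1 == m.+3) = false) ?mulr0 //; lia.
Qed.

Lemma eP_lcs : (eP <= lcs br m)%MS.
Proof.
suff h : forall k, k = m -> (@ev F n k.+2 <= lcs br k)%MS by apply: h.
case=> [|k] e; first exact: submx1.
have /andP[_ h] := @H5 k.+1 (ltac:(lia)).
apply: submx_trans h; have := @ev_sf F n k.+3 (@iT1 m); rewrite viT1 e; apply; lia.
Qed.

Lemma brD (x : 'rV[F]_n) : br x eP = (x 0 i1 + x 0 i2 * bc) *: eT.
Proof.
rewrite -{1}(decomp x); move: (rest_lcs x); move: (rest x) => u hu.
have z : br u eP = 0.
  apply/eqP; rewrite -submx0 -lcs_top.
  by have := lcs_br Hbr hu eP_lcs; rewrite add1n.
have h1 : br e1 eP = eT by apply: H4; rewrite /=; lia.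
have h2 : br e2 eP = bc *: eT.
  rewrite {1}(sf_top (v := br e2 eP)) //.
  apply: submx_trans (lcs_sub (k := m.+1) _); last lia.
  by have := lcs_br Hbr (i := 0) (submx1 e2) eP_lcs.
rewrite !(brDl Hbr) !(brZl Hbr) z h1 h2 addr0 scalerA -scalerDl.
by rewrite mulrC.
Qed.


Definition phiA (c : F) (y : 'rV[F]_n) := y + (c * y 0 i2) *: eT.
Definition phiB (y : 'rV[F]_n) := y + y 0 i2 *: eP + y 0 i3 *: eT.

Lemma evT2 : eT 0 i2 = 0. Proof. by rewrite evE vi2. Qed.

Lemma phiA_aut c : lie_automorphism br (phiA c).
Proof.
have lin : is_linear_map (phiA c).
  by move=> a x y; apply/rowP => k; rewrite /phiA !mxE; ring.
split => //.
  apply: inj_bij => // y; rewrite /phiA => h.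
  have : (y + c * y 0 i2 *: eT) 0 i2 = 0 by rewrite h mxE.
  rewrite !mxE vi2 /= mulr0 addr0 => y2.
  by move: h; rewrite y2 mulr0 scale0r addr0.
move=> x y; rewrite /phiA (proj2 (brB12 x y)) mulr0 scale0r addr0.
by rewrite !(brDl Hbr) !(brDr Hbr) !(brZl Hbr) !(brZr Hbr) !brTl !brTr !scaler0 !addr0.
Qed.

Lemma phiB_aut : lie_automorphism br phiB.
Proof.
have lin : is_linear_map phiB.
  by move=> a x y; apply/rowP => k; rewrite /phiB !mxE; ring.
split => //.
  apply: inj_bij => // y; rewrite /phiB => h.
  have h2 : (y + y 0 i2 *: eP + y 0 i3 *: eT) 0 i2 = 0 by rewrite h mxE.
  have h3 : (y + y 0 i2 *: eP + y 0 i3 *: eT) 0 i3 = 0 by rewrite h mxE.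
  move: h2 h3; rewrite !mxE vi2 vi3 /= !eqSS => h2 h3.
  have dbl (t : F) : t + t = 0 -> t = 0.
    by move/eqP; rewrite -mulr2n -mulr_natr mulf_eq0 pnatr_eq0 orbF => /eqP.
  have [y2 y3] : y 0 i2 = 0 /\ y 0 i3 = 0.
    move: h2 h3; case: (boolP (0 == m)) => b0; case: (boolP (1 == m)) => b1;
      rewrite ?b0 ?b1 ?mulr1 ?mulr0 ?addr0.
    - by exfalso; move/eqP: b0 => b0; move/eqP: b1 => b1; lia.
    - by move=> a b; split; apply: dbl.
    - by move=> a; rewrite a addr0 => ->.
    - by move=> a b.
  by move: h; rewrite y2 y3 !scale0r !addr0.
move=> x y; rewrite /phiB (proj2 (brB12 x y)) brC scale0r addr0.
rewrite !(brDl Hbr) !(brDr Hbr) !(brZl Hbr) !(brZr Hbr) !brTl !brTr !(brxx Hbr).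
rewrite [br eP y](brN Hbr) !brD.
by apply/rowP => k; rewrite !mxE; ring.
Qed.

Lemma coord3 (x : 'rV[F]_n) : coordk x 3 = x 0 i3.
Proof. by have := coordkE x i3; rewrite vi3. Qed.

Lemma main_res : local_automorphism br (@Delta3 F n) /\ ~ lie_automorphism br (@Delta3 F n).
Proof.
split.
  split.
    by move=> a x y; rewrite /Delta3 !coord3; apply/rowP => k; rewrite !mxE; ring.
  move=> x; case: (eqVneq (x 0 i2) 0) => h.
    exists phiB; split; first exact: phiB_aut.
    by rewrite /phiB /Delta3 coord3 h scale0r addr0.
  exists (phiA (x 0 i3 / x 0 i2)); split; first exact: phiA_aut.
  by rewrite /phiA /Delta3 coord3 divfK.
case=> _ _ hom.
have := hom e1 e2; rewrite /Delta3 !coord3 !evE vi3 /= !scale0r !addr0.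
have h12 : br e1 e2 = @ev F n 3 by apply: H4; lia.
rewrite h12.
rewrite !evE vi3 /= scale1r => /eqP; rewrite -subr_eq0 addrC addKr => /eqP.
move/rowP => /(_ iT); rewrite !mxE /= eqxx => /eqP; rewrite oner_eq0 //.
Qed.

End Spec.

Theorem lemma4p3 (F : numClosedFieldType) (n : nat)
  (br : 'rV[F]_n -> 'rV[F]_n -> 'rV[F]_n) :
  (3 <= n)%N ->
  is_lie_bracket br ->
  filiform br ->
  (forall i, (2 <= i <= n.-1)%N -> br (@ev F n 1) (@ev F n i) = @ev F n i.+1) ->
  (forall k, (1 <= k <= n - 2)%N -> (lcs br k == @span_from F n k.+2)%MS) ->
  local_automorphism br (@Delta3 F n) /\ ~ lie_automorphism br (@Delta3 F n).
Proof.
case: n br => [|[|[|m]]] br // _ Hbr Hfil H4 H5.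
exact: main_res.
Qed.
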